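(* For every fixed $0<\beta\leq 1$ there exists a constant $c_\beta$ such that the following holds. For every $0<\alpha<1$ and every dimension $d\geq 1$, if $L=[-1,-\beta]\cup\{\alpha\}$, then $N_L(d)\leq c_\beta\, d$; that is, every $L$-spherical code in $\mathbb{R}^d$ has at most $c_\beta d$ elements.
   Context: For a set $L\subseteq[-1,1]$, an $L$-spherical code in $\mathbb{R}^d$ is a set $P$ of unit vectors in $\mathbb{R}^d$ such that $\langle v,v'\rangle\in L$ for every pair of distinct $v,v'\in P$. $N_L(d)$ denotes the maximum cardinality of an $L$-spherical code in $\mathbb{R}^d$. *)

(* Defs.v *)
From HB Require Import structures.
From mathcomp Require Import all_boot all_order all_algebra.
From mathcomp Require Import finmap.
From mathcomp Require Import reals.
Set Implicit Arguments. Unset Strict Implicit. Unset Printing Implicit Defensive.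
Import Order.TTheory GRing.Theory Num.Theory.
Local Open Scope ring_scope.
Local Open Scope fset_scope.

Definition dotp (R : realType) (d : nat) (u v : 'rV[R]_d) : R :=
  \sum_(i < d) u 0 i * v 0 i.

Definition L_set (R : realType) (beta alpha : R) (x : R) : Prop :=
  (-1 <= x /\ x <= - beta) \/ x = alpha.

Definition spherical_code (R : realType) (d : nat) (L : R -> Prop)
    (P : {fset 'rV[R]_d}) : Prop :=
  (forall v, v \in P -> dotp v v = 1) /\
  (forall v w, v \in P -> w \in P -> v != w -> L (dotp v w)).

(* Main.v *)
Require Import Defs.
From HB Require Import structures.
From mathcomp Require Import all_boot all_order all_algebra.
From mathcomp Require Import finmap.
From mathcomp Require Import reals.
From mathcomp Require Import ring lra.
Set Implicit Arguments. Unset Strict Implicit. Unset Printing Implicit Defensive.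
Import Order.TTheory GRing.Theory Num.Theory.
Local Open Scope ring_scope.
Local Open Scope ring_scope.


Section Dot.
Variables (R : realType) (d : nat).
Implicit Types u v w : 'rV[R]_d.

Lemma dotpC u v : dotp u v = dotp v u.
Proof. by apply: eq_bigr => i _; rewrite mulrC. Qed.

Lemma dotpDl u v w : dotp (u + v) w = dotp u w + dotp v w.
Proof. by rewrite /dotp -big_split; apply: eq_bigr => i _; rewrite mxE mulrDl. Qed.

Lemma dotpZl (a : R) u w : dotp (a *: u) w = a * dotp u w.
Proof. by rewrite /dotp mulr_sumr; apply: eq_bigr => i _; rewrite mxE mulrA. Qed.

Lemma dotpNl u w : dotp (- u) w = - dotp u w.
Proof. by rewrite -scaleN1r dotpZl mulN1r. Qed.

Lemma dotpBl u v w : dotp (u - v) w = dotp u w - dotp v w.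
Proof. by rewrite dotpDl dotpNl. Qed.

Lemma dotpDr u v w : dotp w (u + v) = dotp w u + dotp w v.
Proof. by rewrite dotpC dotpDl !(dotpC w). Qed.
Lemma dotpZr (a : R) u w : dotp w (a *: u) = a * dotp w u.
Proof. by rewrite dotpC dotpZl dotpC. Qed.
Lemma dotpBr u v w : dotp w (u - v) = dotp w u - dotp w v.
Proof. by rewrite dotpC dotpBl !(dotpC w). Qed.

Lemma dotp0l w : dotp 0 w = 0.
Proof. by rewrite -(scale0r 0) dotpZl mul0r. Qed.

Lemma dotp_ge0 u : 0 <= dotp u u.
Proof. by apply: sumr_ge0 => i _; rewrite -expr2 sqr_ge0. Qed.

Lemma dotp_suml (I : Type) (s : seq I) (P : pred I) (F : I -> 'rV[R]_d) w :
  dotp (\sum_(i <- s | P i) F i) w = \sum_(i <- s | P i) dotp (F i) w.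
Proof.
elim: s => [|x s IH]; first by rewrite !big_nil dotp0l.
by rewrite !big_cons; case: (P x) => //; rewrite dotpDl IH.
Qed.

Lemma dotp_sumr (I : Type) (s : seq I) (P : pred I) (F : I -> 'rV[R]_d) w :
  dotp w (\sum_(i <- s | P i) F i) = \sum_(i <- s | P i) dotp w (F i).
Proof. by rewrite dotpC dotp_suml; apply: eq_bigr => i _; rewrite dotpC. Qed.

End Dot.



Section S2.
Variables (R : realType) (d : nat).

Lemma sum_const_seq (I : Type) (s : seq I) (c : R) :
  \sum_(i <- s) c = c * (size s)%:R.
Proof.
elim: s => [|x s IH]; first by rewrite big_nil mulr0.
by rewrite big_cons IH /= -add1n natrD; ring.
Qed.

Lemma sum_indic (I : eqType) (s : seq I) x : x \in s -> uniq s ->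
  \sum_(y <- s) ((x == y)%:R : R) = 1.
Proof.
move=> xs us; rewrite (bigD1_seq x) //= eqxx big1 ?addr0 // => y.
by rewrite eq_sym => /negbTE ->.
Qed.

Lemma dotp_sum_sq (s : seq 'rV[R]_d) (c : R) : uniq s ->
  (forall x, x \in s -> dotp x x = 1) ->
  (forall x y, x \in s -> y \in s -> x != y -> dotp x y <= c) ->
  dotp (\sum_(x <- s) x) (\sum_(x <- s) x) <= (size s)%:R * (c * (size s)%:R + 1 - c).
Proof.
move=> us h1 hc.
rewrite dotp_suml.
have -> : (size s)%:R * (c * (size s)%:R + 1 - c) =
   \sum_(x <- s) (c * (size s)%:R + 1 - c) by rewrite sum_const_seq mulrC.
rewrite big_seq [X in _ <= X]big_seq; apply: ler_sum => x xs.
rewrite dotp_sumr.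
have -> : c * (size s)%:R + 1 - c = \sum_(y <- s) (c + (1 - c) * (x == y)%:R).
  by rewrite big_split /= sum_const_seq -mulr_sumr sum_indic //; ring.
rewrite big_seq [X in _ <= X]big_seq; apply: ler_sum => y ys.
have [<-|nxy] := eqVneq x y; first by rewrite h1 // mulr1; lra.
by rewrite mulr0 addr0 hc.
Qed.

End S2.



Section S3.
Variables (R : realType) (d : nat).

Definition code' (beta alpha : R) (P : {fset 'rV[R]_d}) :=
  (forall v, v \in P -> dotp v v = 1) /\
  (forall v w, v \in P -> w \in P -> v != w -> dotp v w <= - beta \/ dotp v w = alpha).

Lemma clique_bound (beta : R) (K : {fset 'rV[R]_d}) : 0 < beta ->
  (forall v, v \in K -> dotp v v = 1) ->
  (forall x y, x \in K -> y \in K -> x != y -> dotp x y <= - beta) ->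
  beta * ((#|` K|)%:R - 1) <= 1.
Proof.
move=> b0 h1 hc.
have := dotp_sum_sq (fset_uniq K) h1 hc.
have := dotp_ge0 (\sum_(x <- K) x).
move: (size K) => n; set S := dotp _ _ => h0 h.
have : 0 <= n%:R * (- beta * n%:R + 1 - - beta) :> R by apply: le_trans h.
case: n {h} => [|n]; first by move=> _; rewrite sub0r mulrN1; lra.
rewrite -natr1 => hh.
have n0 : 0 <= n%:R :> R by [].
nra.
Qed.

Lemma deg_bound (beta alpha : R) (P : {fset 'rV[R]_d}) u :
  0 < beta -> 0 < alpha -> 2 * alpha <= beta ^+ 2 -> code' beta alpha P -> u \in P ->
  (#|` [fset w in P | (w != u) && (dotp u w != alpha)]%fset|)%:R * beta ^+ 2 <= 2.
Proof.
move=> b0 a0 hab [h1 h2] uP.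
set B := [fset w in P | _]%fset.
have hB : forall w, w \in B -> [/\ w \in P, w != u & dotp u w <= - beta].
  move=> w; rewrite !inE => /andP[wP /andP[wu uw]]; split=> //.
  by case: (h2 u w uP wP); rewrite 1?eq_sym // => e; rewrite e eqxx in uw.
have hs := @dotp_sum_sq R d B alpha (fset_uniq B)
  (fun x xB => h1 x (let: And3 a _ _ := hB x xB in a)).
have hs' : dotp (\sum_(x <- B) x) (\sum_(x <- B) x) <=
    (size B)%:R * (alpha * (size B)%:R + 1 - alpha).
  apply: hs => x y xB yB xy.
  have [xP _ _] := hB x xB; have [yP _ _] := hB y yB.
  case: (h2 x y xP yP xy) => [h|->] //; lra.
have hD : dotp u (\sum_(x <- B) x) <= - beta * (size B)%:R.
  rewrite dotp_sumr -sum_const_seq big_seq [X in _ <= X]big_seq.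
  by apply: ler_sum => x xB; have [] := hB x xB.
set s := \sum_(x <- B) x.
set b : R := (size B)%:R.
have := dotp_ge0 (s + (beta * b) *: u).
rewrite !dotpDl !dotpDr !dotpZl !dotpZr (h1 u uP) (dotpC s u) => h.
move: hs' hD; rewrite -/s -/b => hs' hD.
have b0' : 0 <= b by rewrite /b.
rewrite -/b.
have hbD : beta * b * dotp u s <= beta * b * (- beta * b).
  by apply: ler_wpM2l => //; apply: mulr_ge0 => //; apply: ltW.
have hab2 : 2 * alpha * (b * b) <= beta ^+ 2 * (b * b).
  by apply: ler_wpM2r => //; apply: mulr_ge0.
have hab3 : 0 <= alpha * b by apply: mulr_ge0 => //; apply: ltW.
have hh : beta ^+ 2 * b * b <= 2 * b.
  rewrite expr2 in hab2 *. nra.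
have [->|bpos] := eqVneq b 0; first by lra.
have bp : 0 < b by rewrite lt0r bpos.
nra.
Qed.

Lemma aclique_bound (alpha : R) (I : {fset 'rV[R]_d}) : 0 < alpha -> alpha < 1 ->
  (forall v, v \in I -> dotp v v = 1) ->
  (forall x y, x \in I -> y \in I -> x != y -> dotp x y = alpha) ->
  (#|` I| <= d)%N.
Proof.
move=> a0 a1 h1 ha.
pose X := in_tuple (I : seq 'rV[R]_d).
have fX : free X.
  apply/freeP => k hk i.
  set vs := \sum_(i < _) _ in hk.
  have e0 : dotp vs vs = 0 by rewrite hk dotp0l.
  have hg : forall i j : 'I_(size I), dotp (X`_i) (X`_j) =
      alpha + (1 - alpha) * (i == j)%:R.
    move=> i0 j0; have [<-|nij] := eqVneq i0 j0.
      by rewrite h1 ?mulr1 ?mem_nth //; ring.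
    rewrite mulr0 addr0 ha ?mem_nth //.
    by rewrite nth_uniq ?fset_uniq.
  have : dotp vs vs = alpha * (\sum_(i < size I) k i) ^+ 2 +
      (1 - alpha) * \sum_(i < size I) k i ^+ 2.
    rewrite /vs dotp_suml.
    under eq_bigr => i0 _ do rewrite dotp_sumr.
    under eq_bigr => i0 _ do under eq_bigr => j0 _ do
      rewrite dotpZl dotpZr hg.
    rewrite (eq_bigr (fun i0 => alpha * k i0 * (\sum_(j < size I) k j) + (1 - alpha) * k i0 ^+ 2)); last first.
      move=> i0 _.
      rewrite (eq_bigr (fun j => alpha * k i0 * k j + (1 - alpha) * (k i0 * k j * (i0 == j)%:R))); last by move=> j _; ring.
      rewrite big_split /= -!mulr_sumr.
      have -> : \sum_(j < size I) k i0 * k j * (i0 == j)%:R = k i0 ^+ 2.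
        rewrite (bigD1 i0) //= eqxx mulr1 big1 ?addr0 ?expr2 //.
        by move=> j; rewrite eq_sym => /negbTE ->; rewrite mulr0.
      ring.
    rewrite big_split /= -mulr_suml -!mulr_sumr; ring.
  rewrite e0 => e1.
  have Q0 : 0 <= \sum_(i0 < size I) k i0 ^+ 2 by apply: sumr_ge0 => j _; exact: sqr_ge0.
  have K0 : 0 <= (\sum_(i0 < size I) k i0) ^+ 2 by exact: sqr_ge0.
  have Qe : \sum_(i0 < size I) k i0 ^+ 2 = 0 by nra.
  have /eqP := Qe; rewrite psumr_eq0 => [/allP hall|j _]; last exact: sqr_ge0.
  have := hall i (mem_index_enum _) => /= /eqP.
  by move/eqP; rewrite sqrf_eq0 => /eqP.
have -> : #|` I| = \dim <<X>> by rewrite (eqP fX).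
have : (\dim <<X>> <= \dim (fullv : {vspace 'rV[R]_d}))%N by apply: dimvS; apply: subvf.
by rewrite dimvf /= dim_matrix mul1r.
Qed.

End S3.



Section S4.
Variables (R : realType) (d : nat).
Implicit Types (P Q : {fset 'rV[R]_d}).

Lemma card_sub3 (Q A C : {fset 'rV[R]_d}) q :
  (Q `<=` q |` (A `|` C))%fset -> (#|` Q| <= 1 + #|` A| + #|` C|)%N.
Proof.
move=> /fsubset_leq_card h; apply: (leq_trans h).
rewrite cardfsU1 cardfsU -addnA leq_add //; first by case: (_ \notin _).
exact: leq_subr.
Qed.

Lemma exists_mem Q : Q != fset0 -> exists q, q \in Q.
Proof. by case/fset0Pn => q qQ; exists q. Qed.

Lemma card_lt_del Q (Q' : {fset 'rV[R]_d}) q : q \in Q -> (Q' `<=` Q)%fset -> q \notin Q' ->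
  (#|` Q'| < #|` Q|)%N.
Proof.
move=> qQ sQ nq.
have : (Q' `<=` Q `\ q)%fset.
  apply/fsubsetP => x xQ'; rewrite !inE (fsubsetP sQ) // andbT.
  by apply: contraNneq nq => <-.
move/fsubset_leq_card; rewrite (cardfsD1 q Q) qQ add1n.
by [].
Qed.

Lemma indep_greedy (beta alpha Delta : R) P : code' beta alpha P -> 0 <= Delta ->
  (forall u, u \in P ->
     (#|` [fset w in P | (w != u) && (dotp u w != alpha)]%fset|)%:R <= Delta) ->
  forall n Q, (#|` Q| <= n)%N -> (Q `<=` P)%fset ->
  exists I : {fset 'rV[R]_d}, [/\ (I `<=` Q)%fset,
    (forall x y, x \in I -> y \in I -> x != y -> dotp x y = alpha) &
    (#|` Q|)%:R <= (Delta + 1) * (#|` I|)%:R].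
Proof.
move=> [h1 h2] D0 hD; elim=> [|n IH] Q cQ sQ.
  have -> : Q = fset0 by apply: cardfs0_eq; apply/eqP; rewrite -leqn0.
  exists fset0; split; [exact: fsub0set | by move=> x y; rewrite inE | by rewrite cardfs0 mulr0].
have [->|/exists_mem [q qQ]] := eqVneq Q fset0.
  exists fset0; split; [exact: fsub0set | by move=> x y; rewrite inE | by rewrite cardfs0 mulr0].
have qP : q \in P by rewrite (fsubsetP sQ).
set Q' := [fset w in Q | (w != q) && (dotp q w == alpha)]%fset.
have sQ'Q : (Q' `<=` Q)%fset by apply: fset_sub.
have nq : q \notin Q' by rewrite !inE eqxx /= andbF.
have cQ' : (#|` Q'| <= n)%N.
  by rewrite -ltnS; exact: leq_trans (card_lt_del qQ sQ'Q nq) cQ.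
have [I [sI hI cI]] := IH Q' cQ' (fsubset_trans sQ'Q sQ).
exists (q |` I)%fset; split.
- apply/fsubsetP => x; rewrite !inE => /orP[/eqP->//|xI].
  by apply: (fsubsetP sQ'Q); apply: (fsubsetP sI).
- have hq : forall x, x \in I -> dotp q x = alpha.
    by move=> x /(fsubsetP sI); rewrite !inE => /andP[_ /andP[_ /eqP]].
  move=> x y; rewrite !inE => /orP[/eqP->|xI] /orP[/eqP->|yI].
  + by rewrite eqxx.
  + by move=> _; apply: hq.
  + by move=> _; rewrite dotpC; apply: hq.
  + by apply: hI.
- have qI : q \notin I by apply: contra nq; apply: (fsubsetP sI).
  rewrite cardfsU1 qI add1n.
  have hsub : (Q `<=` q |` ([fset w in P | (w != q) && (dotp q w != alpha)]%fset `|` Q'))%fset.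
    apply/fsubsetP => x xQ; rewrite !inE.
    have [->|xq] := eqVneq x q; first by [].
    rewrite xQ (fsubsetP sQ) //=.
    by case: (dotp q x == alpha).
  have := card_sub3 hsub.
  rewrite -(ler_nat R) !natrD => hc.
  have := hD q qP; move: hc cI.
  set a := (#|` Q|)%:R; set b := (#|` _ |)%:R; set c := (#|` Q'|)%:R.
  rewrite -natr1 => hc cI hb.
  nra.
Qed.

Lemma clique_greedy (beta alpha M : R) P : 0 < beta -> code' beta alpha P -> 0 <= M ->
  (forall u, u \in P ->
     (#|` [fset w in P | dotp u w == alpha]%fset|)%:R <= M) ->
  forall n Q (K : {fset 'rV[R]_d}), (#|` Q| <= n)%N -> (Q `<=` P)%fset -> (K `<=` P)%fset ->
  (forall x y, x \in K -> y \in K -> x != y -> dotp x y <= - beta) ->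
  (forall q k, q \in Q -> k \in K -> dotp q k <= - beta) ->
  (#|` Q|)%:R <= (1 + beta^-1 - (#|` K|)%:R) * (M + 1).
Proof.
move=> b0 [h1 h2] M0 hM; elim=> [|n IH] Q K cQ sQ sK hK hQK.
  have -> : Q = fset0 by apply: cardfs0_eq; apply/eqP; rewrite -leqn0.
  rewrite cardfs0; apply: mulr_ge0; last by lra.
  have := clique_bound b0 (fun v vK => h1 v (fsubsetP sK v vK)) hK.
  move: (#|` K|%:R) => k hk.
  have : k - 1 <= beta^-1.
    by rewrite -(ler_pM2l b0) mulfV ?gt_eqF.
  lra.
have [->|/exists_mem [q qQ]] := eqVneq Q fset0.
  rewrite cardfs0; apply: mulr_ge0; last by lra.
  have := clique_bound b0 (fun v vK => h1 v (fsubsetP sK v vK)) hK.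
  move: (#|` K|%:R) => k hk.
  have : k - 1 <= beta^-1.
    by rewrite -(ler_pM2l b0) mulfV ?gt_eqF.
  lra.
have qP : q \in P by rewrite (fsubsetP sQ).
set Q' := [fset w in Q | (w != q) && (dotp q w != alpha)]%fset.
have sQ'Q : (Q' `<=` Q)%fset by apply: fset_sub.
have nq : q \notin Q' by rewrite !inE eqxx /= andbF.
have cQ' : (#|` Q'| <= n)%N.
  by rewrite -ltnS; exact: leq_trans (card_lt_del qQ sQ'Q nq) cQ.
have qK : q \notin K.
  apply/negP => qK; have := hQK q q qQ qK; rewrite h1 //; lra.
have hQ'q : forall w, w \in Q' -> dotp w q <= - beta.
  move=> w; rewrite !inE => /andP[wQ /andP[wq qw]].
  rewrite dotpC; case: (h2 q w qP (fsubsetP sQ w wQ)); rewrite 1?eq_sym //.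
  by move=> e; rewrite e eqxx in qw.
have := IH Q' (q |` K)%fset cQ' (fsubset_trans sQ'Q sQ).
rewrite cardfsU1 qK add1n -natr1 => IH'.
have {}IH' := IH' _ _ _.
have hc : (#|` Q'|)%:R <= (1 + beta^-1 - ((#|` K|)%:R + 1)) * (M + 1).
  apply: IH'.
  - apply/fsubsetP => x; rewrite !inE => /orP[/eqP->//|]; exact: (fsubsetP sK).
  - move=> x y; rewrite !inE => /orP[/eqP->|xK] /orP[/eqP->|yK].
    + by rewrite eqxx.
    + by move=> _; apply: hQK.
    + by move=> _; rewrite dotpC; apply: hQK.
    + by apply: hK.
  - move=> w k wQ'; rewrite !inE => /orP[/eqP->|kK]; first exact: hQ'q.
    by apply: hQK => //; apply: (fsubsetP sQ'Q).
have hsub : (Q `<=` q |` ([fset w in P | dotp q w == alpha]%fset `|` Q'))%fset.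
  apply/fsubsetP => x xQ; rewrite !inE.
  have [->|xq] := eqVneq x q; first by [].
  rewrite xQ (fsubsetP sQ) //=.
  by case: (dotp q x == alpha).
have := card_sub3 hsub.
rewrite -(ler_nat R) !natrD => hc2.
have := hM q qP; move: hc hc2.
set a := (#|` Q|)%:R; set c := (#|` Q'|)%:R; set k := (#|` K|)%:R.
move=> hc hc2 hb.
nra.
Qed.

Lemma proj_code (beta alpha : R) P u : 0 < beta -> 0 < alpha -> alpha < 1 ->
  code' beta alpha P -> u \in P ->
  exists Q, code' beta (alpha / (1 + alpha)) Q /\
    #|` Q| = #|` [fset w in P | dotp u w == alpha]%fset|.
Proof.
move=> b0 a0 a1 [h1 h2] uP.
set W := [fset w in P | dotp u w == alpha]%fset.
have hW : forall w, w \in W -> w \in P /\ dotp u w = alpha.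
  by move=> w; rewrite !inE => /andP[? /eqP].
have e0 : 0 < 1 - alpha ^+ 2 by nra.
set s := Num.sqrt ((1 - alpha ^+ 2)^-1).
have s2 : s ^+ 2 = (1 - alpha ^+ 2)^-1.
  by rewrite sqr_sqrtr // invr_ge0 ltW.
have s0 : s != 0.
  by rewrite sqrtr_eq0 -ltNge invr_gt0.
set f := fun w : 'rV[R]_d => s *: (w - alpha *: u).
have fdot : forall w1 w2, w1 \in W -> w2 \in W ->
    dotp (f w1) (f w2) = (dotp w1 w2 - alpha ^+ 2) / (1 - alpha ^+ 2).
  move=> w1 w2 /hW [w1P e1] /hW [w2P e2].
  rewrite /f dotpZl dotpZr !dotpBl !dotpBr !dotpZl !dotpZr (dotpC w1 u) e1 e2 h1 //.
  rewrite mulrA -expr2 s2; field; lra.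
have finj : {in W &, injective f}.
  move=> w1 w2 _ _; rewrite /f => /(scalerI s0) /addIr //.
exists (f @` W)%fset; split; last by rewrite card_in_imfset.
split.
- move=> v /imfsetP [w /= wW ->]; rewrite fdot //.
  have [wP e] := hW w wW; rewrite h1 //; field; lra.
- move=> v1 v2 /imfsetP [w1 /= w1W ->] /imfsetP [w2 /= w2W ->] ne.
  have nw : w1 != w2 by apply: contraNneq ne => ->.
  have [w1P _] := hW w1 w1W; have [w2P _] := hW w2 w2W.
  rewrite fdot //; case: (h2 w1 w2 w1P w2P nw) => [h|->].
  + left; rewrite ler_pdivrMr //; nra.
  + right; field; lra.
Qed.

End S4.



Lemma base_bound (R : realType) (d : nat) (beta alpha : R) (P : {fset 'rV[R]_d}) :
  0 < beta -> 0 < alpha -> alpha < 1 -> 2 * alpha <= beta ^+ 2 ->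
  code' beta alpha P -> (#|` P|)%:R <= (2 / beta ^+ 2 + 1) * d%:R.
Proof.
move=> b0 a0 a1 hab hc.
have b2 : 0 < beta ^+ 2 by rewrite exprn_gt0.
have hD : forall u, u \in P ->
   (#|` [fset w in P | (w != u) && (dotp u w != alpha)]%fset|)%:R <= 2 / beta ^+ 2.
  move=> u uP; have := deg_bound b0 a0 hab hc uP.
  by rewrite ler_pdivlMr.
have D0 : 0 <= 2 / beta ^+ 2 by rewrite divr_ge0 // ltW.
have [I [sI hI cI]] := indep_greedy hc D0 hD (leqnn _) (fsubset_refl P).
have hIc := aclique_bound a0 a1 (fun v vI => (proj1 hc) v (fsubsetP sI v vI)) hI.
apply: (le_trans cI); apply: ler_wpM2l; first lra.
by rewrite ler_nat.
Qed.

Lemma chain (R : realType) (beta : R) : 0 < beta -> forall j : nat,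
  exists c : R, 0 <= c /\ forall (d : nat) (alpha : R) (P : {fset 'rV[R]_d}),
    (1 <= d)%N -> 0 < alpha -> alpha < 1 ->
    2 * alpha <= beta ^+ 2 * (1 + j%:R * alpha) ->
    code' beta alpha P -> (#|` P|)%:R <= c * d%:R.
Proof.
move=> b0; have b2 : 0 < beta ^+ 2 by rewrite exprn_gt0.
have bi : 0 < beta^-1 by rewrite invr_gt0.
elim=> [|j [c [c0 IH]]].
  exists (2 / beta ^+ 2 + 1); split.
    by apply: addr_ge0 => //; rewrite divr_ge0 // ltW.
  move=> d alpha P _ a0 a1 hab hc.
  have hab' : 2 * alpha <= beta ^+ 2 by move: hab; rewrite mul0r addr0 mulr1.
  exact: (@base_bound R d beta alpha P b0 a0 a1 hab' hc).
exists ((1 + beta^-1) * (c + 1)); split.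
  by apply: mulr_ge0; lra.
move=> d alpha P d1 a0 a1 hab hc.
have dR : 1 <= d%:R :> R by rewrite ler1n.
have hM : forall u, u \in P ->
    (#|` [fset w in P | dotp u w == alpha]%fset|)%:R <= c * d%:R.
  move=> u uP; have [Q [hQ <-]] := proj_code b0 a0 a1 hc uP.
  apply: (IH d (alpha / (1 + alpha)) Q d1) => //.
  - by rewrite divr_gt0 //; lra.
  - by rewrite ltr_pdivrMr; lra.
  - have e : 1 + alpha != 0 by rewrite gt_eqF //; lra.
    rewrite -(ler_pM2r (_ : 0 < 1 + alpha)); last by lra.
    have -> : 2 * (alpha / (1 + alpha)) * (1 + alpha) = 2 * alpha by field.
    have -> : beta ^+ 2 * (1 + j%:R * (alpha / (1 + alpha))) * (1 + alpha) =
       beta ^+ 2 * (1 + j.+1%:R * alpha) by rewrite -natr1; field.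
    exact: hab.
have M0 : 0 <= c * d%:R by apply: mulr_ge0.
have k1 : forall x y, x \in (fset0 : {fset 'rV[R]_d}) -> y \in (fset0 : {fset 'rV[R]_d}) -> x != y -> dotp x y <= - beta.
  by move=> x y; rewrite inE.
have k2 : forall q k, q \in P -> k \in (fset0 : {fset 'rV[R]_d}) -> dotp q k <= - beta.
  by move=> q k _; rewrite inE.
have := clique_greedy b0 hc M0 hM (leqnn _) (fsubset_refl P) (fsub0set P) k1 k2.
rewrite cardfs0 subr0 => h; apply: (le_trans h).
have : c * d%:R + 1 <= (c + 1) * d%:R by nra.
move=> h2; rewrite -mulrA; apply: ler_wpM2l; first lra.
exact: h2.
Qed.

Unset Implicit Arguments.
Local Open Scope fset_scope.

Theorem theorem1 (R : realType) (beta : R) (hb0 : 0 < beta) (hb1 : beta <= 1) :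
  exists c : R, forall (alpha : R) (d : nat),
    0 < alpha -> alpha < 1 -> (1 <= d)%N ->
    forall P : {fset 'rV[R]_d},
      spherical_code (L_set beta alpha) P ->
      (#|` P|%:R : R) <= c * d%:R.
Proof.
have b2 : 0 < beta ^+ 2 by rewrite exprn_gt0.
have bx : 0 <= 2 / beta ^+ 2 by rewrite divr_ge0 // ltW.
have hJ := archi_boundP bx.
set J := Num.Def.archi_bound _ in hJ.
have [c [c0 hc]] := chain hb0 J.
exists c => alpha d a0 a1 d1 P [h1 h2].
apply: (hc d alpha P d1 a0 a1).
  have : 2 <= beta ^+ 2 * J%:R.
    have e : beta ^+ 2 * (2 / beta ^+ 2) = 2 by field; rewrite gt_eqF.
    move: hJ; set y := 2 / beta ^+ 2 => hJ.
    by have := ltW hJ => /(ler_wpM2l (ltW b2)); rewrite /y e.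
  move/(ler_wpM2r (ltW a0)) => h; rewrite mulrDr mulr1 mulrA; lra.
split=> // v w vP wP vw.
by case: (h2 v w vP wP vw) => [[_ ->]|->]; [left|right].
Qed.
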